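(* In the setting below, $C=S/\operatorname{Ann}_S(F)$ is a free extension with base $A=\mathsf{k}[t]/(t^n)$ and fiber $B=R/\operatorname{Ann}_R(F_B)$ (via $\iota,\pi$) if and only if for every $g_{n-1}\in\operatorname{Ann}_R(F_B)$ there exist $g_0,\dots,g_{n-2}\in R$ such that $t^{n-1}g_0+t^{n-2}g_1+\cdots+tg_{n-2}+g_{n-1}\in\operatorname{Ann}_S(F)$.
   Context: $\mathsf{k}$ a field, $n\ge2$, $R=\mathsf{k}[x_1,\dots,x_r]$ standard graded, $S=R[t]$; $Q_R=\mathsf{k}_{DP}[X_1,\dots,X_r]$, $Q_S=\mathsf{k}_{DP}[X_1,\dots,X_r,T]$ divided power rings with the contraction action ($x_i^s\circ X_i^{[k]}=X_i^{[k-s]}$ for $k\ge s$, else $0$; likewise $t$ on $T$). $F_B\in Q_R$ homogeneous of degree $j_B$, $G_0=F_B$, $G_i\in Q_R$ homogeneous of degree $j_B+i$ ($1\le i\le n-1$), $F=\sum_{i=0}^{n-1}T^{[n-1-i]}G_i$. $\iota:A\to C$ is induced by $\mathsf{k}[t]\subset S$ and $\pi:C\to B$ by $t\mapsto0$, $x_i\mapsto x_i$. $C$ is a free extension with base $A$ and fiber $B$ if $\iota$ makes $C$ a free $A$-module and $\pi$ is surjective with $\ker\pi=(\iota(A_+))C$. *)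

(* Defs.v *)
From HB Require Import structures.
From mathcomp Require Import all_boot all_order all_algebra.
Set Implicit Arguments. Unset Strict Implicit. Unset Printing Implicit Defensive.
Import GRing.Theory.
Local Open Scope ring_scope.

(* Polynomial ring k[x_1,...,x_r], realised as iterated univariate polynomials:
   P k 0 = k,  P k (r+1) = {poly P k r}  (the outermost variable is x_{r+1}).
   R = P k r, and S = R[t] = {poly P k r} = P k r.+1 (t is the outermost 'X).

   The divided power ring Q_R = k_DP[X_1,...,X_r] is, as a k-vector space,
   free on the divided monomials X^[a]; we represent it on the same carrier
   P k r, the "monomial" X^a of P k r standing for the divided monomial X^[a].
   Likewise Q_S = {poly Q_R} with 'X^j standing for T^[j].  Only the
   contraction action of R (resp. S) on Q_R (resp. Q_S) and the products
   T^[j] * G (G in Q_R), which involve no binomial factors, are used. *)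
Fixpoint P (k : fieldType) (r : nat) : comNzRingType :=
  match r with
  | 0 => k
  | r'.+1 => ({poly P k r'} : comNzRingType)
  end.

(* Contraction action  h o F  of P k r (polynomials) on P k r (divided powers):
   x^s o X^[m] = X^[m-s] if m >= s and 0 otherwise, extended bilinearly. *)
Fixpoint contr (k : fieldType) (r : nat) : P k r -> P k r -> P k r :=
  match r return P k r -> P k r -> P k r with
  | 0 => fun c F => c * F
  | r'.+1 => fun (h F : {poly P k r'}) =>
      \poly_(j < size F) \sum_(i < size h) contr h`_i F`_(i + j)
  end.

Definition Ann (k : fieldType) (r : nat) (F : P k r) (g : P k r) : Prop :=
  contr g F = 0.

Fixpoint homog (k : fieldType) (r : nat) : nat -> P k r -> bool :=
  match r return nat -> P k r -> bool with
  | 0 => fun d c => (d == 0)%N || (c == 0)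
  | r'.+1 => fun d (p : {poly P k r'}) =>
      [forall i : 'I_(size p),
         if (i <= d)%N then homog (d - i) p`_i else p`_i == 0]
  end.

Fixpoint emb (k : fieldType) (r : nat) : k -> P k r :=
  match r return k -> P k r with
  | 0 => fun c => c
  | r'.+1 => fun c => ((emb r' c)%:P : {poly P k r'})
  end.

Definition Fpoly (k : fieldType) (r n : nat) (G : nat -> P k r) : P k r.+1 :=
  \sum_(i < n) (G i)%:P * 'X^(n.-1 - i).

(* Lift to S of the image under iota of (the class in A = k[t]/(t^n) of)
   a in k[t]:  a(t) viewed in S = R[t]. *)
Definition liftA (k : fieldType) (r : nat) (a : {poly k}) : P k r.+1 :=
  map_poly (@emb k r) a.

(* "C = S/Ann_S(F) is a free extension with base A = k[t]/(t^n) and fiber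
   B = R/Ann_R(FB) via iota, pi", written out on representatives:
   elements of C are classes of h in S modulo Ann_S(F), elements of A
   classes of a in k[t] modulo (t^n), elements of B classes of b in R modulo
   Ann_R(FB); iota(a) = class of a(t), pi(class of h) = class of h(x,0) = h`_0.
   (1) C is a free A-module via iota: there is a (necessarily finite, as
       C is finite dimensional) A-basis (s_j)_{j<m}: every element is an
       A-combination of the s_j, and an A-combination vanishes in C only if
       all coefficients vanish in A (i.e. are divisible by t^n);
   (2) pi is surjective;
   (3) ker pi = (iota(A_+)) C, the ideal of C generated by iota(A_+) = (t). *)
Definition free_extension (k : fieldType) (r n : nat) (F : P k r.+1) (FB : P k r)
  : Prop :=
  [/\ (exists m (s : 'I_m -> P k r.+1),
         (forall h : P k r.+1, exists a : 'I_m -> {poly k},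
             Ann F (h - \sum_(j < m) liftA r (a j) * s j))
      /\ (forall a : 'I_m -> {poly k},
             Ann F (\sum_(j < m) liftA r (a j) * s j) ->
             forall j, 'X^n %| a j)),
      (forall b : P k r, exists h : P k r.+1,
          Ann FB ((h : {poly P k r})`_0 - b))
    & (forall h : P k r.+1,
          Ann FB ((h : {poly P k r})`_0) <->
          exists u v : P k r.+1, h = ('X : {poly P k r}) * u + v /\ Ann F v)].

(* Main.v *)
Require Import Defs.
From HB Require Import structures.
From mathcomp Require Import all_boot all_order all_algebra.
From mathcomp Require Import ring zify.
From Stdlib Require Import Classical.
Import GRing.Theory.
Local Open Scope ring_scope.

Section Basic.
Variable k : fieldType.

Lemma contr0l r (F : P k r) : contr 0 F = 0.
Proof.
elim: r F => [|r IH] F /=; first by rewrite mul0r.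
apply/polyP=> j; rewrite coef_poly coef0 size_poly0 big_ord0; by case: ifP.
Qed.

Lemma contr0r r (g : P k r) : contr g 0 = 0.
Proof.
elim: r g => [|r IH] g /=; first by rewrite mulr0.
apply/polyP=> j; rewrite coef_poly coef0; case: ifP => // _; apply: big1 => i _; rewrite (_ : (0 : P k r.+1)`_(i+j) = 0) ?IH // nth_default.
 - reflexivity.
 - by rewrite size_poly0.
Qed.

Lemma contr_coef r (h F : {poly P k r}) N j : (size h <= N)%N ->
  (@contr k r.+1 h F)`_j = \sum_(i < N) contr h`_i F`_(i + j)%N.
Proof.
move=> hN; rewrite /= coef_poly.
rewrite (big_ord_widen N (fun i : nat => contr h`_i F`_(i + j)%N) hN).
rewrite big_mkcond /=; case: ifP => jF.
  by apply: eq_bigr => i _; case: ifP => // /negbT; rewrite -leqNgt => /leq_sizeP ->; rewrite ?contr0l.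
rewrite big1 // => i _.
rewrite [F`_ _]nth_default ?contr0r //; move/negbT: jF; rewrite -leqNgt => jF.
exact: leq_trans jF (leq_addl _ _).
Qed.

Lemma contrD r (g h F : P k r) : contr (g + h) F = contr g F + contr h F.
Proof.
elim: r g h F => [|r IH] g h F /=; first by rewrite mulrDl.
apply/polyP=> j; rewrite coefD.
have := @contr_coef r; move=> cc.
rewrite (cc _ _ (maxn (size g) (size h)) j) ?size_add //.
rewrite (cc g _ (maxn (size g) (size h)) j) ?leq_maxl //.
rewrite (cc h _ (maxn (size g) (size h)) j) ?leq_maxr //.
by rewrite -big_split /=; apply: eq_bigr => i _; rewrite coefD IH.
Qed.

Lemma contrN r (g F : P k r) : contr (- g) F = - contr g F.
Proof. by apply/eqP; rewrite -subr_eq0 opprK addrC -contrD subrr contr0l. Qed.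

Lemma contrB r (g h F : P k r) : contr (g - h) F = contr g F - contr h F.
Proof. by rewrite contrD contrN. Qed.


Lemma embD r (a b : k) : emb r (a + b) = emb r a + emb r b.
Proof. by elim: r => [|r IH] //=; rewrite IH polyCD. Qed.
Lemma embN r (a : k) : emb r (- a) = - emb r a.
Proof. by elim: r => [|r IH] //=; rewrite IH polyCN. Qed.
Lemma embM r (a b : k) : emb r (a * b) = emb r a * emb r b.
Proof. by elim: r => [|r IH] //=; rewrite IH polyCM. Qed.
Lemma emb1 r : emb r (1 : k) = 1.
Proof. by elim: r => [|r IH] //=; rewrite IH. Qed.
Lemma emb0 r : emb r (0 : k) = 0.
Proof. by elim: r => [|r IH] //=; rewrite IH. Qed.

End Basic.

Section Morph.
Variables (k : fieldType) (r : nat).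
Lemma embB (a b : k) : emb r (a - b) = emb r a - emb r b.
Proof. by rewrite embD embN. Qed.
HB.instance Definition _ := GRing.isZmodMorphism.Build k (P k r) (@emb k r) embB.
HB.instance Definition _ := GRing.isMultiplicative.Build k (P k r) (@emb k r) (conj (@embM k r) (@emb1 k r)).
End Morph.

Section More.
Variable k : fieldType.

Lemma contrZ r (c : k) (g F : P k r) : contr (emb r c * g) F = emb r c * contr g F.
Proof.
elim: r g F => [|r IH] g F /=; first by rewrite mulrA.
apply/polyP=> j; rewrite coefCM.
set N := maxn (size ((emb r c)%:P * g)) (size g).
rewrite (@contr_coef k r _ _ N j) ?leq_maxl // (@contr_coef k r _ _ N j) ?leq_maxr //.
by rewrite mulr_sumr; apply: eq_bigr => i _; rewrite coefCM IH.
Qed.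


Definition annS r (Fs : seq (P k r)) (g : P k r) := forall F, F \in Fs -> contr g F = 0.
Arguments annS {r}.

Lemma finspan r (Fs : seq (P k r)) : exists (I : finType) (u : I -> P k r),
  forall h, exists c : I -> k, annS Fs (h - \sum_i emb r (c i) * u i).
Proof.
elim: r Fs => [|r IH] Fs.
  exists unit, (fun _ => 1) => h; exists (fun _ => h) => F _.
  by rewrite big_const card_unit /= addr0 mulr1 subrr /= mul0r.
pose D := (\max_(F <- Fs) size F)%N.
pose Fs' := [seq (F : {poly P k r})`_i | F <- Fs, i <- iota 0 D].
have [I' [u' Hu']] := IH Fs'.
exists ('I_D * I')%type, (fun p : 'I_D * I' => ((u' p.2)%:P * 'X^(p.1) : {poly P k r})) => h.
have /fin_all_exists [f Hf] : forall i : 'I_D, exists c : I' -> k,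
    annS Fs' ((h : {poly P k r})`_i - \sum_l emb r (c l) * u' l).
  by move=> i; apply: Hu'.
exists (fun p => f p.1 p.2) => F FFs.
set d := h - _.
have dco : forall i (iD : (i < D)%N),
    (d : {poly P k r})`_i = (h : {poly P k r})`_i - \sum_l emb r (f (Ordinal iD) l) * u' l.
  move=> i iD; rewrite /d coefB coef_sum; congr (_ - _).
  rewrite -(pair_bigA _ (fun (i' : 'I_D) (l : I') => (emb r.+1 (f i' l) * ((u' l)%:P * 'X^i') : {poly P k r})`_i)) /= (bigD1 (Ordinal iD)) //= [X in _ + X]big1 ?addr0.
    by apply: eq_bigr => l _; rewrite coefCM coefCM coefXn eqxx mulr1.
  move=> i' ne; apply: big1 => l _; rewrite coefCM coefCM coefXn.
  have -> : (i == i') = false.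
    by apply/negbTE; apply: contra ne => /eqP e; apply/eqP/val_inj.
  by rewrite mulr0 mulr0.
have sF : (size F <= D)%N.
  exact: (@leq_bigmax_seq _ Fs xpredT (fun F0 : P k r.+1 => size (F0 : {poly P k r})) F FFs).
apply/polyP => j; rewrite coef0 (@contr_coef k r _ _ (size d) j) // big1 // => i _.
case: (ltnP (i + j) D) => ijD.
  have iD : (i < D)%N by apply: leq_ltn_trans (leq_addr _ _) ijD.
  rewrite (dco _ iD); apply: (Hf (Ordinal iD)); apply: allpairs_f => //; by rewrite mem_iota.
by rewrite [F`_ _]nth_default ?contr0r //; apply: leq_trans sF ijD.
Qed.

Section Extract.
Variables (r : nat) (K : P k r -> Prop).
Hypotheses (K0 : K 0) (KD : forall a b, K a -> K b -> K (a + b))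
  (KZ : forall c a, K a -> K (emb r c * a)).
Variables (I : finType) (u : I -> P k r).
Hypothesis span_u : forall h, exists c : I -> k, K (h - \sum_i emb r (c i) * u i).

Definition spanS (S : {set I}) :=
  forall h, exists c : I -> k, K (h - \sum_(i in S) emb r (c i) * u i).
Definition indepS (S : {set I}) :=
  forall c : I -> k, K (\sum_(i in S) emb r (c i) * u i) -> forall i, i \in S -> c i = 0.

Lemma extract_step S : spanS S -> indepS S \/ exists S', spanS S' /\ (#|S'| < #|S|)%N.
Proof.
move=> sp.
case: (classic (indepS S)) => [|nind]; [by left|right].
have [c [i0 [i0S [Kc ci0]]]] : exists c i0, i0 \in S /\ K (\sum_(i in S) emb r (c i) * u i) /\ c i0 != 0.
  apply: NNPP => H; apply: nind => c Kc i iS; apply: NNPP => ne; apply: H.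
  by exists c, i; split => //; split => //; apply/eqP.
exists (S :\ i0); split; last by rewrite (cardsD1 i0 S) i0S.
move=> h; have [c' Kc'] := sp h.
pose l := c' i0 / c i0.
exists (fun i => c' i - l * c i).
have E : emb r l * emb r (c i0) = emb r (c' i0) by rewrite -rmorphM /l divfK.
have Ssplit : forall g : I -> k, \sum_(i in S) emb r (g i) * u i =
    emb r (g i0) * u i0 + \sum_(i in S :\ i0) emb r (g i) * u i.
  move=> g; rewrite (bigD1 i0) //=; congr (_ + _).
  by apply: eq_bigl => i; rewrite in_setD1 andbC.
have -> : \sum_(i in S :\ i0) emb r (c' i - l * c i) * u i =
    \sum_(i in S :\ i0) emb r (c' i) * u i - emb r l * \sum_(i in S :\ i0) emb r (c i) * u i.
  rewrite mulr_sumr -sumrB; apply: eq_bigr => i _.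
  by rewrite rmorphB rmorphM mulrBl mulrA.
move: (KD _ _ (KZ l _ Kc) Kc'); rewrite !Ssplit.
set B := \sum_(i in S :\ i0) _; set A := \sum_(i in S :\ i0) _.
suff -> : h - (A - emb r l * B) = emb r l * (emb r (c i0) * u i0 + B) + (h - (emb r (c' i0) * u i0 + A)) by [].
by rewrite -E; ring.
Qed.

Lemma extract : exists m (b : 'I_m -> P k r),
  (forall h, exists c : 'I_m -> k, K (h - \sum_j emb r (c j) * b j)) /\
  (forall c : 'I_m -> k, K (\sum_j emb r (c j) * b j) -> forall j, c j = 0).
Proof.
have [S [spS inS]] : exists S, spanS S /\ indepS S.
  suff : forall N (S : {set I}), (#|S| <= N)%N -> spanS S -> exists S, spanS S /\ indepS S.
    move=> H; apply: (H #|[set: I]| [set: I] (leqnn _)); rewrite /spanS => h.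
    have [c Kc] := span_u h; exists c.
    by rewrite (eq_bigl xpredT) // => i; rewrite in_setT.
  elim=> [|N IH] S cS spS; case: (@extract_step S spS) => [ind|[S' [sp' lt']]].
  - by exists S.
  - by move: (leq_trans lt' cS).
  - by exists S.
  - by apply: (IH S') => //; rewrite -ltnS; apply: leq_trans lt' cS.
exists #|S|, (fun j => u (enum_val j)); split.
  move=> h; have [c Kc] := spS h; exists (fun j => c (enum_val j)).
  by move: Kc; rewrite big_enum_val.
move=> c' Kc' j.
pose c x := if [pick j | enum_val j == x] is Some j then c' j else 0.
have cE : forall j, c (enum_val j) = c' j.
  move=> j0; rewrite /c; case: pickP => [j1 /eqP /enum_val_inj -> //|/(_ j0)].
  by rewrite eqxx.
rewrite -cE; apply: inS; last exact: enum_valP.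
rewrite big_enum_val.
by under eq_bigr do rewrite cE.
Qed.
End Extract.

Lemma basisB r (FB : P k r) : exists m (b : 'I_m -> P k r),
  (forall h, exists c : 'I_m -> k, Ann FB (h - \sum_j emb r (c j) * b j)) /\
  (forall c : 'I_m -> k, Ann FB (\sum_j emb r (c j) * b j) -> forall j, c j = 0).
Proof.
have [I [u Hu]] := @finspan r [:: FB].
apply: (@extract r (fun g => contr g FB = 0) _ _ I u).
- by move=> a b Ha Hb; rewrite contrD Ha Hb addr0.
- by move=> c a Ha; rewrite contrZ Ha mulr0.
- move=> h; have [c Hc] := Hu h; exists c; apply: Hc; exact: mem_head.
Qed.

Lemma contr_shift r (F w : P k r.+1) e j :
  (@contr k r.+1 ('X^e * w : {poly P k r}) F)`_j = (@contr k r.+1 w F : {poly P k r})`_(j + e).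
Proof.
rewrite (@contr_coef k r _ _ (e + size w) j); last first.
  by apply: leq_trans (size_mul_leq _ _) _; rewrite size_polyXn addSn.
rewrite (@contr_coef k r _ _ (size w) (j + e)) // big_split_ord /= big1 ?add0r.
  apply: eq_bigr => i _; rewrite coefXnM ltnNge leq_addr /= addKn; congr (contr _ F`_ _); lia.
by move=> i _; rewrite coefXnM /= ltn_ord contr0l.
Qed.

Lemma size_contr r (F w : P k r.+1) : (size (@contr k r.+1 w F : {poly P k r}) <= size (F : {poly P k r}))%N.
Proof. exact: size_poly. Qed.

Lemma ann_Xn r (F w : P k r.+1) n : (size (F : {poly P k r}) <= n)%N ->
  Ann F ('X^n * w : {poly P k r}).
Proof.
move=> sF; rewrite /Ann; apply/polyP => j; rewrite contr_shift coef0 nth_default //.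
by rewrite /=; apply: leq_trans (size_poly _ _) (leq_trans sF (leq_addl _ _)).
Qed.

Lemma ann_Xe r (F v : P k r.+1) e : Ann F v -> Ann F ('X^e * v : {poly P k r}).
Proof. by rewrite /Ann => H; apply/polyP => j; rewrite contr_shift H !coef0. Qed.

Lemma key r (F w : P k r.+1) n : (size (F : {poly P k r}) <= n)%N -> (0 < n)%N ->
  (@contr k r.+1 w F : {poly P k r})`_(n.-1) = contr (w : {poly P k r})`_0 (F : {poly P k r})`_(n.-1).
Proof.
move=> sF n0; rewrite (@contr_coef k r _ _ (size w).+1 n.-1) // big_ord_recl /= add0n.
rewrite big1 ?addr0 // => i _; rewrite [F`_ _]nth_default ?contr0r //.
by apply: leq_trans sF _; rewrite /bump /=; lia.
Qed.


Lemma coefF r n (G : nat -> P k r) j :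
  (Fpoly n G : {poly P k r})`_j = if (j < n)%N then G (n.-1 - j)%N else 0.
Proof.
rewrite /Fpoly coef_sum; under eq_bigr do rewrite coefCM coefXn.
case: ifP => jn.
  have i0n : (n.-1 - j < n)%N by lia.
  rewrite (bigD1 (Ordinal i0n)) //= [X in _ + X]big1 ?addr0.
    by rewrite (_ : (j == n.-1 - (n.-1 - j))%N = true) ?mulr1 //; apply/eqP; lia.
  move=> i ne; rewrite (_ : (j == n.-1 - i)%N = false) ?mulr0 //.
  apply/negbTE; apply: contra ne => /eqP e; apply/eqP/val_inj => /=; have := ltn_ord i; lia.
apply: big1 => i _; rewrite (_ : (j == n.-1 - i)%N = false) ?mulr0 //.
by apply/negbTE/eqP; have := ltn_ord i; lia.
Qed.

Lemma decomp (R : nzRingType) (w : {poly R}) : w = (w`_0)%:P + 'X * drop_poly 1 w.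
Proof.
apply/polyP => i; rewrite coefD coefC coefXM coef_drop_poly.
by case: i => [|i] /=; rewrite ?addr0 ?add0r ?addn1.
Qed.

End More.
Theorem lemma2p3 (k : fieldType) (r n jB : nat) (FB : P k r) (G : nat -> P k r) :
  (2 <= n)%N ->
  homog jB FB ->
  G 0%N = FB ->
  (forall i : nat, (1 <= i <= n.-1)%N -> homog (jB + i) (G i)) ->
  free_extension n (Fpoly n G) FB <->
  (forall gl : P k r, Ann FB gl ->
     exists g : nat -> P k r,
       Ann (Fpoly n G)
         (\sum_(i < n.-1) ((g i)%:P * 'X^(n.-1 - i) : {poly P k r}) + gl%:P)).
Proof.
move=> n2 _ G0 _.
set F := Fpoly n G.
have sF : (size (F : {poly P k r}) <= n)%N.
  by apply/leq_sizeP => j jn; rewrite coefF ltnNge jn.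
have FnB : (F : {poly P k r})`_(n.-1) = FB.
  by rewrite coefF (_ : (n.-1 < n)%N) ?subnn ?G0 //; lia.
have key0 : forall w : P k r.+1, Ann F w -> Ann FB (w : {poly P k r})`_0.
  move=> w; rewrite /Ann => Hw; rewrite -FnB -key //; last by lia.
  by rewrite Hw coef0.
have AnnD : forall a b : P k r.+1, Ann F a -> Ann F b -> Ann F (a + b).
  by move=> a b; rewrite /Ann => Ha Hb; rewrite contrD Ha Hb addr0.
have Ann0 : Ann F 0 by apply: contr0l.
split.
  case=> _ _ H3 gl Hgl.
  have := (H3 (gl%:P : {poly P k r})).1; rewrite coefC => /(_ Hgl) [u [v [E Hv]]].
  exists (fun i => - (u : {poly P k r})`_((n.-1 - i).-1)).
  have QE : \sum_(i < n.-1) ((- (u : {poly P k r})`_((n.-1 - i).-1))%:P * 'X^(n.-1 - i) : {poly P k r})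
      = - ('X * take_poly n.-1 u).
    rewrite /take_poly poly_def mulr_sumr -sumrN (reindex_inj rev_ord_inj) /=.
    apply: eq_bigr => j _.
    have e : (n.-1 - (n.-1 - j.+1) = j.+1)%N by have := ltn_ord j; lia.
    by rewrite e /= polyCN mulNr -mul_polyC exprS mulrCA.
  rewrite QE E -{2}(poly_take_drop n.-1 u).
  have Xn : 'X^n = 'X * 'X^(n.-1) :> {poly P k r} by rewrite -exprS prednK //; lia.
  have -> : - ('X * take_poly n.-1 u) + ('X * (take_poly n.-1 u + drop_poly n.-1 u * 'X^(n.-1)) + v)
     = v + 'X^n * drop_poly n.-1 u :> {poly P k r} by rewrite Xn; ring.
  by apply: AnnD => //; apply: ann_Xn.
have Qz : forall g : nat -> P k r,
    (\sum_(i < n.-1) ((g i)%:P * 'X^(n.-1 - i) : {poly P k r}))`_0 = 0.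
  move=> g; rewrite coef_sum big1 // => i _; rewrite coefCM coefXn.
  rewrite (_ : (0 == n.-1 - i)%N = false) ?mulr0 //.
  by apply/negbTE/eqP; have := ltn_ord i; lia.
move=> RHS; split.
- have [m [b [spB inB]]] := @basisB k r FB.
  exists m, (fun j => ((b j)%:P : {poly P k r})); split.
    have SP : forall N (h : P k r.+1), exists (a : 'I_m -> {poly k}) (w : P k r.+1),
        Ann F (h - \sum_j liftA r (a j) * ((b j)%:P : {poly P k r}) - 'X^N * w : {poly P k r}).
      elim=> [|N IH] h.
        exists (fun _ => 0), h; rewrite expr0 mul1r big1 ?subr0 ?subrr //.
        by move=> j _; rewrite /liftA map_poly0 mul0r.
      have [a [w Hw]] := IH h.
      have [c Hc] := spB ((w : {poly P k r})`_0).
      have [g Hg] := RHS _ Hc.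
      move: Hg; set Q := \sum_(i < n.-1) _; set gl := _ - _ => Hg.
      rewrite (@decomp _ Q) Qz polyC0 add0r in Hg.
      rewrite (@decomp _ w) in Hw.
      exists (fun j => a j + (c j)%:P * 'X^N), (drop_poly 1 (w : {poly P k r}) - drop_poly 1 Q).
      have E1 : \sum_j liftA r (a j + (c j)%:P * 'X^N) * ((b j)%:P : {poly P k r})
          = \sum_j liftA r (a j) * (b j)%:P + 'X^N * \sum_j (emb r (c j))%:P * (b j)%:P.
        rewrite mulr_sumr -big_split; apply: eq_bigr => j _.
        rewrite /liftA rmorphD rmorphM /= map_polyC map_polyXn; ring.
      have E2 : (gl%:P : {poly P k r}) = ((w : {poly P k r})`_0)%:P - \sum_j (emb r (c j))%:P * (b j)%:P.
        by rewrite /gl polyCB rmorph_sum; congr (_ - _); apply: eq_bigr => j _; rewrite -polyCM.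
      move: (AnnD _ _ Hw (@ann_Xe k r _ _ N Hg)); rewrite E2.
      suff -> : (h - \sum_j liftA r (a j + (c j)%:P * 'X^N) * ((b j)%:P : {poly P k r})
         - 'X^(N.+1) * (drop_poly 1 (w : {poly P k r}) - drop_poly 1 Q) : {poly P k r}) =
        h - \sum_j liftA r (a j) * (b j)%:P - 'X^N * (((w : {poly P k r})`_0)%:P + 'X * drop_poly 1 (w : {poly P k r}))
        + 'X^N * ('X * drop_poly 1 Q + (((w : {poly P k r})`_0)%:P - \sum_j (emb r (c j))%:P * (b j)%:P)) by [].
      rewrite E1 exprS; ring.
    move=> h; have [a [w Hw]] := SP n h; exists a.
    move: (AnnD _ _ Hw (@ann_Xn k r _ w _ sF)); by rewrite subrK.
  have IND : forall e, (e <= n)%N -> forall a : 'I_m -> {poly k},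
      Ann F ('X^(n - e) * \sum_j liftA r (a j) * ((b j)%:P : {poly P k r}) : {poly P k r}) ->
      forall j, 'X^e %| a j.
    elim=> [|e IH] en a Ha j; first by rewrite expr0 dvd1p.
    move: Ha; set W := \sum_j _ => Ha.
    have W0 : Ann FB (W`_0).
      move: Ha; rewrite /Ann => /(congr1 (fun p : {poly P k r} => p`_e)).
      rewrite contr_shift coef0 (_ : (e + (n - e.+1) = n.-1)%N); last by lia.
      by rewrite key // ?FnB //; lia.
    have W0e : W`_0 = \sum_j emb r ((a j)`_0) * b j.
      by rewrite /W coef_sum; apply: eq_bigr => i _; rewrite coefMC /liftA coef_map.
    have a0 : forall j, (a j)`_0 = 0 by apply: inB; rewrite -W0e.
    have Wd : W = 'X * \sum_j liftA r (drop_poly 1 (a j)) * ((b j)%:P : {poly P k r}).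
      rewrite mulr_sumr; apply: eq_bigr => i _.
      by rewrite {1}(@decomp _ (a i)) a0 polyC0 add0r /liftA rmorphM /= map_polyX mulrA.
    have IH' := IH (ltnW en) (fun j => drop_poly 1 (a j)).
    rewrite (@decomp _ (a j)) a0 polyC0 add0r exprS; apply: dvdp_mul; first exact: dvdpp.
    apply: IH'; move: Ha; rewrite Wd mulrA -exprSr (_ : ((n - e.+1).+1 = n - e)%N) //; lia.
  move=> a Ha j; apply: (IND n (leqnn n)); by rewrite subnn expr0 mul1r.
- by move=> b; exists (b%:P : {poly P k r}); rewrite coefC /= subrr; apply: contr0l.
- move=> h; split.
    move=> H0; have [g Hg] := RHS _ H0.
    set Q := \sum_(i < n.-1) _ in Hg.
    have Q0 : Q`_0 = 0.
      rewrite /Q coef_sum big1 // => i _; rewrite coefCM coefXn.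
      rewrite (_ : (0 == n.-1 - i)%N = false) ?mulr0 //.
      by apply/negbTE/eqP; have := ltn_ord i; lia.
    exists (drop_poly 1 (h : {poly P k r}) - drop_poly 1 Q), (Q + ((h : {poly P k r})`_0)%:P); split => //.
    rewrite {1}(@decomp _ h) {2}(@decomp _ Q) Q0 polyC0 add0r.
    ring.
  case=> u [v [-> Hv]]; rewrite coefD coefXM /= add0r; exact: key0.
Qed.
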